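(* Let $A\in\mathcal{A}_{n,1}$ and $(N,E)=\Lambda(A)$. Then $-\ell(N)\le B(A)\le c(N)$.
   Context: An alternating sign matrix (ASM) of order $n$ is an $n\times n$ matrix $A=(a_{ij})$ with entries in $\{-1,0,1\}$ such that in every row and every column the nonzero entries alternate in sign, the first and the last nonzero entries being $1$. $\mathcal{A}_{n,s}$ denotes the set of order-$n$ ASMs having exactly $s$ entries equal to $-1$ (so $\mathcal{A}_{n,0}$ is the set of $n\times n$ permutation matrices). For an ASM $A=(a_{ij})$, $\overline{A}=(a_{i,n+1-j})$ is the vertical reflection of $A$. Let $A\in\mathcal{A}_{n,1}$. The opening column is the column containing the unique $-1$; the closing row is the row containing the $-1$; the opening row is the row of the $1$ of the opening column lying above the $-1$. The columns strictly to the left (resp. right) of the opening column form the left side (resp. right side). The closing row contains exactly two $1$'s, one in each side; the one in the right side is the closing $1$ and its column is the closing column. The rows strictly between the opening row and the closing row are the enclosed rows. $A$ is neutral if there are no enclosed rows; otherwise $A$ is positive if the $1$ of the lowest enclosed row lies in the right side, and negative if it lies in the left side. $\mathcal{A}_{n,1}^{+},\mathcal{A}_{n,1}^{0},\mathcal{A}_{n,1}^{-}$ denote the sets of positive, neutral, negative elements of $\mathcal{A}_{n,1}$; $A$ is negative iff $\overline{A}$ is positive. For $A\in\mathcal{A}_{n,1}^{+}\cup\mathcal{A}_{n,1}^{0}$: the charged cell is the intersection of the enclosed rows with the right side; the extended neutral cell is the intersection of the rows from the opening row to the closing row (inclusive) with the left side. The leading $1$ is the highest $1$ in the left side strictly below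 the opening row; its column is the leading column; the leading cell consists of the entries strictly below the opening row and strictly between the leading column and the opening column, and $\ell(A)$ is the sum of its entries. The closing cell consists of the entries strictly below the closing row and strictly between the opening column and the closing column, and $c(A)$ is the sum of its entries; the extended closing cell consists of the entries strictly below the closing row in the columns from the opening column to the closing column inclusive. Parameters: if $A$ is positive, $E(A)$ is the sum of the entries of the charged cell; if $A$ is neutral, $E(A)=0$; if $A$ is negative, $E(A)=-E(\overline{A})$. For $A\in\mathcal{A}_{n,1}^{+}\cup\mathcal{A}_{n,1}^{0}$, $B(A)=c(A)-\ell(A)$; for $A\in\mathcal{A}_{n,1}^{-}$, $B(A)=-B(\overline{A})$. Horizontal displacement: for an $m\times q$ $(0,1)$-matrix $P$ whose nonzero columns are $j_1<\dots<j_t$ with $j_1=1$ and $j_t<q$, $H(P)$ is the $m\times q$ matrix whose column $j_{s+1}$ equals column $j_s$ of $P$ for $1\le s\le t$ (where $j_{t+1}=q$), all other columns being zero. Vertical displacement: for an $m\times q$ $(0,1)$-matrix $P$ whose nonzero rows are $i_1<\dots<i_t$ with $i_1>1$ and $i_t=m$, $V(P)$ is the $m\times q$ matrix whose row $i_{s-1}$ equals row $i_s$ of $P$ for $1\le s\le t$ (where $i_0=1$), all other rows being zero. Partial discharging procedure: for $A\in\mathcal{A}_{n,1}^{+}\cup\mathcal{A}_{n,1}^{0}$, $\delta(A)$ is obtained by applying successively the following steps (all cells, rows and columns referring to the positions they occupy in $A$): (1) replace the $-1$ and the closing $1$ by $0$; (2) replace the submatrix occupying the extended closing cell by its image under $H$;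 (3) replace the submatrix occupying the extended neutral cell by its image under $V$; (4) lower the entries of the extended neutral cell and of the charged cell by one row: in the left side, for each row $t$ strictly below the opening row up to and including the closing row, the left part of row $t$ becomes the former left part of row $t-1$, and the left part of the opening row becomes zero; in the right side, for each row $t$ from two rows below the opening row up to and including the closing row, the right part of row $t$ becomes the former right part of row $t-1$, and the right part of the row immediately below the opening row becomes zero. The complete discharging procedure is $\Delta(A)=(k,\delta(A),c(A),E(A))$, where $k$ is the index of the opening row of $A$. It is known that $\Delta$ is injective on $\mathcal{A}_{n,1}^{+}\cup\mathcal{A}_{n,1}^{0}$, and that whenever $\Delta(A)=(k,P,c,E)$, there is a unique $N\in\mathcal{A}_{n,1}^{+}\cup\mathcal{A}_{n,1}^{0}$ with $\Delta(N)=(k,P,c+E,0)$, and this $N$ is neutral. Neutralizing procedure $\Lambda$: for $A\in\mathcal{A}_{n,1}^{+}\cup\mathcal{A}_{n,1}^{0}$ with $\Delta(A)=(k,P,c,E)$, $\Lambda(A)=(N,E)$ where $N$ is the unique element with $\Delta(N)=(k,P,c+E,0)$. For $A\in\mathcal{A}_{n,1}^{-}$, write $\Lambda(\overline{A})=(M,-E)$ and set $\Lambda(A)=(\overline{M},E)$. *)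

(* Defs.v *)
(* Matrices are 'M[int]_n; all positional bookkeeping is done
   on 0-based natural-number indices (row i, column j, 0 <= i,j < n). *)
From mathcomp Require Import all_boot all_order all_algebra.
Set Implicit Arguments. Unset Strict Implicit. Unset Printing Implicit Defensive.
Import Order.TTheory GRing.Theory Num.Theory.

Definition ent {n} (A : 'M[int]_n) (i j : nat) : int :=
  match (insub i : option 'I_n), (insub j : option 'I_n) with
  | Some i', Some j' => A i' j'
  | _, _ => 0%R
  end.

Definition mkmx n (f : nat -> nat -> int) : 'M[int]_n :=
  \matrix_(i < n, j < n) f (nat_of_ord i) (nat_of_ord j).

Definition refl {n} (A : 'M[int]_n) : 'M[int]_n :=
  \matrix_(i < n, j < n) A i (rev_ord j).

Definition nzseq (s : seq int) : seq int := [seq x <- s | x != 0%R].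
Definition alt_ok (s : seq int) : bool :=
  let t := nzseq s in
  [&& head 0%R t == 1%R, last 0%R t == 1%R & sorted (fun x y => y == (- x)%R) t].

Definition is_asm {n} (A : 'M[int]_n) : bool :=
  [&& [forall i, forall j, A i j \in [:: (-1)%R; 0%R; 1%R]],
      [forall i : 'I_n, alt_ok [seq A i j | j <- enum 'I_n]] &
      [forall j : 'I_n, alt_ok [seq A i j | i <- enum 'I_n]]].

Definition num_neg {n} (A : 'M[int]_n) : nat :=
  #|[set ij : 'I_n * 'I_n | A ij.1 ij.2 == (-1)%R]|.

Definition in_ASM n (s : nat) (A : 'M[int]_n) : bool := is_asm A && (num_neg A == s).
Arguments in_ASM : clear implicits.

Definition cl_row {n} (A : 'M[int]_n) : nat :=
  find (fun i => has (fun j => ent A i j == (-1)%R) (iota 0 n)) (iota 0 n).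
Definition op_col {n} (A : 'M[int]_n) : nat :=
  find (fun j => ent A (cl_row A) j == (-1)%R) (iota 0 n).
Definition op_row {n} (A : 'M[int]_n) : nat :=
  find (fun i => (i < cl_row A)%N && (ent A i (op_col A) == 1%R)) (iota 0 n).
Definition cl_col {n} (A : 'M[int]_n) : nat :=
  find (fun j => (op_col A < j)%N && (ent A (cl_row A) j == 1%R)) (iota 0 n).

Definition neutral {n} (A : 'M[int]_n) : bool := cl_row A == (op_row A).+1.
Definition positive {n} (A : 'M[int]_n) : bool :=
  ((op_row A).+1 < cl_row A)%N &&
  has (fun j => (op_col A < j)%N && (ent A (cl_row A).-1 j == 1%R)) (iota 0 n).
Definition negative {n} (A : 'M[int]_n) : bool :=
  ((op_row A).+1 < cl_row A)%N &&
  has (fun j => (j < op_col A)%N && (ent A (cl_row A).-1 j == 1%R)) (iota 0 n).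

Definition rsum n (f : nat -> nat -> int) (P : nat -> nat -> bool) : int :=
  (\sum_(i < n) \sum_(j < n) (if P i j then f i j else 0))%R.

Definition charged {n} (A : 'M[int]_n) : int :=
  rsum n (ent A) (fun i j => (op_row A < i < cl_row A)%N && (op_col A < j)%N).

Definition lead_row {n} (A : 'M[int]_n) : nat :=
  find (fun i => (op_row A < i)%N &&
           has (fun j => (j < op_col A)%N && (ent A i j == 1%R)) (iota 0 n)) (iota 0 n).
Definition lead_col {n} (A : 'M[int]_n) : nat :=
  find (fun j => (j < op_col A)%N && (ent A (lead_row A) j == 1%R)) (iota 0 n).

Definition ell {n} (A : 'M[int]_n) : int :=
  rsum n (ent A) (fun i j => (op_row A < i)%N && (lead_col A < j < op_col A)%N).
Definition cpar {n} (A : 'M[int]_n) : int :=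
  rsum n (ent A) (fun i j => (cl_row A < i)%N && (op_col A < j < cl_col A)%N).

Definition Epar {n} (A : 'M[int]_n) : int :=
  if positive A then charged A
  else if negative A then (- charged (refl A))%R
  else 0%R.

Definition Bpar {n} (A : 'M[int]_n) : int :=
  if negative A then (- (cpar (refl A) - ell (refl A)))%R
  else (cpar A - ell A)%R.

(* Horizontal displacement H on the cell with rows {i | R i} and columns c0..c1:
   value at (i,j) of the cell after displacement.  Nonzero columns
   j_1 < ... < j_t; column j_{s+1} receives column j_s, with j_{t+1} = c1. *)
Definition Hdisp n (f : nat -> nat -> int) (R : nat -> bool) (c0 c1 : nat)
    (i j : nat) : int :=
  let nzc := fun j' => has (fun i' => R i' && (f i' j' != 0%R)) (iota 0 n) in
  let prev := [seq j' <- iota c0 (j - c0) | nzc j'] in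
  if (nzc j || (j == c1)) && (prev != [::]) then f i (last 0%N prev) else 0%R.

(* Vertical displacement V on the cell with rows r0..r1 and columns {j | C j}:
   nonzero rows i_1 < ... < i_t; row i_{s-1} receives row i_s, with i_0 = r0. *)
Definition Vdisp n (f : nat -> nat -> int) (C : nat -> bool) (r0 r1 : nat)
    (i j : nat) : int :=
  let nzr := fun i' => has (fun j' => C j' && (f i' j' != 0%R)) (iota 0 n) in
  let nxt := [seq i' <- iota i.+1 (r1 - i) | nzr i'] in
  if (nzr i || (i == r0)) && (nxt != [::]) then f (head 0%N nxt) j else 0%R.

Definition delta {n} (A : 'M[int]_n) : 'M[int]_n :=
  let r := cl_row A in let p := op_col A in
  let k := op_row A in let q := cl_col A in
  let a1 := fun i j => if (i == r) && ((j == p) || (j == q)) then 0%R else ent A i j in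
  let a2 := fun i j => if (r < i < n)%N && (p <= j <= q)%N
                       then Hdisp n a1 (fun i' => (r < i' < n)%N) p q i j
                       else a1 i j in
  let a3 := fun i j => if (k <= i <= r)%N && (j < p)%N
                       then Vdisp n a2 (fun j' => (j' < p)%N) k r i j
                       else a2 i j in
  let a4 := fun i j =>
    if (j < p)%N && (k <= i <= r)%N then (if i == k then 0%R else a3 i.-1 j)
    else if (p < j)%N && (k < i <= r)%N then (if i == k.+1 then 0%R else a3 i.-1 j)
    else a3 i j in
  mkmx n a4.

Definition Delta {n} (A : 'M[int]_n) : nat * 'M[int]_n * int * int :=
  (op_row A, delta A, cpar A, Epar A).

(* Lambda(A) = (N, E) for A positive or neutral *)
Definition Lambda_pn {n} (A N : 'M[int]_n) (E : int) : Prop :=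
  [/\ E = Epar A, in_ASM n 1 N, positive N || neutral N &
      Delta N = (op_row A, delta A, (cpar A + Epar A)%R, 0%R)].

Definition Lambda {n} (A N : 'M[int]_n) (E : int) : Prop :=
  if negative A then Lambda_pn (refl A) (refl N) (- E)%R
  else Lambda_pn A N E.

(* Main.v *)
Require Import Defs.
From mathcomp Require Import all_boot all_order all_algebra zify.
Set Implicit Arguments. Unset Strict Implicit. Unset Printing Implicit Defensive.
Import Order.TTheory GRing.Theory Num.Theory.
Local Open Scope ring_scope.

Definition sig1 (x : int) : int := if x == 1 then 1 else 0.

Lemma alt_aux (s : seq int) (x : int) :
  (x == 1) || (x == -1) ->
  path (fun x y => y == - x) x (nzseq s) ->
  (forall m, 0 <= sig1 x + \sum_(y <- take m s) y <= 1) /\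
  sig1 x + \sum_(y <- s) y = sig1 (last x (nzseq s)).
Proof.
elim: s x => [|y s IH] x hx /=.
  split=> [m|]; last by rewrite big_nil addr0.
  by rewrite big_nil addr0 /sig1; case: ifP.
rewrite /nzseq /=; case: ifP => hy.
  move=> /= /andP [/eqP ey hp].
  have hy' : (y == 1) || (y == -1).
    by rewrite ey; case/orP: hx => /eqP ->; rewrite ?opprK eqxx ?orbT.
  have e : sig1 x + y = sig1 y.
    by case/orP: hx => /eqP ex; rewrite ey ex /sig1 /= ?opprK.
  have [IH1 IH2] := IH y hy' hp.
  split.
    case=> [|m]; first by rewrite take0 big_nil addr0 /sig1; case: ifP.
    by rewrite /= big_cons addrA e.
  by rewrite big_cons addrA e.
move/negbFE: hy => /eqP -> hp.
have [IH1 IH2] := IH x hx hp.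
split.
  case=> [|m]; first by rewrite take0 big_nil addr0 /sig1; case: ifP.
  by rewrite /= big_cons add0r.
by rewrite big_cons add0r.
Qed.

Lemma alt_sums (s : seq int) : alt_ok s ->
  (forall m, 0 <= \sum_(y <- take m s) y <= 1) /\ \sum_(y <- s) y = 1.
Proof.
rewrite /alt_ok /=; case E: (nzseq s) => [|z t] /=; first by [].
case/and3P => /eqP hz hl hp.
have hp' : path (fun x y => y == - x) (-1) (nzseq s) by rewrite E /= hz opprK eqxx /= -hz.
have [h1 h2] := @alt_aux s (-1) (orbT _) hp'.
have s0 : sig1 (-1) = 0 by [].
split; first by move=> m; have := h1 m; rewrite s0 add0r.
by rewrite s0 add0r in h2; rewrite h2 E /= /sig1 (eqP hl) eqxx.
Qed.
Local Close Scope ring_scope.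

Lemma findS (P : pred nat) n : has P (iota 0 n) ->
  [/\ find P (iota 0 n) < n, P (find P (iota 0 n)) &
      forall y, y < find P (iota 0 n) -> ~~ P y].
Proof.
move=> hs; have fl : find P (iota 0 n) < n by rewrite -[X in _ < X](size_iota 0 n) -has_find.
split=> //.
  by have := nth_find 0 hs; rewrite nth_iota.
move=> y hy; have := before_find 0 hy; rewrite nth_iota ?add0n ?(ltn_trans hy) //.
by move=> ->.
Qed.

Lemma findI (P : pred nat) n x : x < n -> P x -> (forall y, y < x -> ~~ P y) ->
  find P (iota 0 n) = x.
Proof.
move=> hx px hmin.
have hs : has P (iota 0 n) by apply/hasP; exists x; rewrite ?mem_iota.
have [fl pf fm] := findS hs.
case: (ltngtP (find P (iota 0 n)) x) => // h.
  by move: (hmin _ h); rewrite pf.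
by move: (fm _ h); rewrite px.
Qed.

Lemma entE n (A : 'M[int]_n) (i j : 'I_n) : ent A i j = A i j.
Proof. by rewrite /ent !valK. Qed.

Lemma ent_out n (A : 'M[int]_n) i j : (n <= i) || (n <= j) -> ent A i j = 0%R.
Proof.
rewrite /ent; case/orP => h.
  by rewrite insubF // ltnNge h.
by case: insub => // ?; rewrite insubF // ltnNge h.
Qed.

Lemma ent_mkmx n f i j : i < n -> j < n -> ent (mkmx n f) i j = f i j.
Proof. by move=> hi hj; rewrite /ent !insubT /mkmx mxE. Qed.

Lemma ent_refl n (A : 'M[int]_n) i j : j < n -> ent (refl A) i j = ent A i (n - j.+1).
Proof.
move=> hj; case: (ltnP i n) => hi; last by rewrite !ent_out ?hi.
have h' : n - j.+1 < n by exact: (rev_ord_proof (Ordinal hj)).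
rewrite /ent !insubT //= /refl mxE; congr (A _ _); exact: val_inj.
Qed.

Lemma row_seq n (A : 'M[int]_n) (i : 'I_n) :
  [seq A i j | j <- enum 'I_n] = map (ent A i) (iota 0 n).
Proof. by rewrite -val_enum_ord -map_comp; apply: eq_map => j /=; rewrite entE. Qed.

Lemma col_seq n (A : 'M[int]_n) (j : 'I_n) :
  [seq A i j | i <- enum 'I_n] = map (ent A ^~ j) (iota 0 n).
Proof. by rewrite -val_enum_ord -map_comp; apply: eq_map => i /=; rewrite entE. Qed.

Lemma seq_sums (f : nat -> int) n : alt_ok (map f (iota 0 n)) ->
  (forall m, m <= n -> (0 <= \sum_(j < m) f j <= 1)%R) /\ (\sum_(j < n) f j = 1)%R.
Proof.
case/alt_sums => h1 h2; split.
  move=> m hm; have := h1 m; rewrite -map_take take_iota big_map.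
  by rewrite (minn_idPl hm) -(big_mkord xpredT) /index_iota subn0.
by rewrite big_map in h2; rewrite -(big_mkord xpredT) /index_iota subn0.
Qed.

Lemma ent_ord n (A : 'M[int]_n) i j (hi : i < n) (hj : j < n) :
  ent A i j = A (Ordinal hi) (Ordinal hj).
Proof. by rewrite -entE. Qed.

Lemma asm_vals n A : in_ASM n 1 A -> forall i j, ent A i j \in [:: (-1)%R; 0%R; 1%R].
Proof.
case/andP => /and3P [/forallP h _ _] _ i j.
case: (ltnP i n) => hi; last by rewrite ent_out ?hi.
case: (ltnP j n) => hj; last by rewrite ent_out ?hj ?orbT.
rewrite (ent_ord _ hi hj); exact: (forallP (h (Ordinal hi)) (Ordinal hj)).
Qed.

Lemma asm_row n A : in_ASM n 1 A -> forall i, i < n ->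
  (forall m, m <= n -> (0 <= \sum_(j < m) ent A i j <= 1)%R) /\
  (\sum_(j < n) ent A i j = 1)%R.
Proof.
case/andP => /and3P [_ /forallP h _] _ i hi.
apply: seq_sums; rewrite -(row_seq A (Ordinal hi)); exact: h.
Qed.

Lemma asm_col n A : in_ASM n 1 A -> forall j, j < n ->
  (forall m, m <= n -> (0 <= \sum_(i < m) ent A i j <= 1)%R) /\
  (\sum_(i < n) ent A i j = 1)%R.
Proof.
case/andP => /and3P [_ _ /forallP h] _ j hj.
apply: (@seq_sums (fun i => ent A i j)); rewrite -(col_seq A (Ordinal hj)); exact: h.
Qed.

Lemma ent_in n (A : 'M[int]_n) i j : ent A i j != 0%R -> i < n /\ j < n.
Proof.
case: (ltnP i n) => hi; last by rewrite ent_out ?hi ?eqxx.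
case: (ltnP j n) => hj; last by rewrite ent_out ?hj ?orbT ?eqxx.
by [].
Qed.

Lemma asm_neg n A : in_ASM n 1 A -> exists r p,
  [/\ r < n, p < n, ent A r p = (-1)%R &
      forall i j, ent A i j = (-1)%R -> i = r /\ j = p].
Proof.
case/andP => _ /cards1P [[r p] hS].
have hm : (r, p) \in [set ij : 'I_n * 'I_n | A ij.1 ij.2 == (-1)%R] by rewrite hS set11.
rewrite inE /= in hm.
exists r, p; split => //; first by rewrite entE (eqP hm).
move=> i j he.
have [hi hj] : i < n /\ j < n by apply: (@ent_in n A); rewrite he oppr_eq0 oner_eq0.
rewrite (ent_ord _ hi hj) in he.
have : (Ordinal hi, Ordinal hj) \in [set ij : 'I_n * 'I_n | A ij.1 ij.2 == (-1)%R].
  by rewrite inE /= he.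
by rewrite hS => /set1P [<- <-].
Qed.

Lemma sum_one_unique m (P : pred nat) (F : nat -> int) (x y : 'I_m) :
  (forall j : 'I_m, P j -> 0 <= F j)%R -> (\sum_(j < m | P j) F j <= 1)%R ->
  P x -> F x = 1%R -> P y -> y != x -> F y = 0%R.
Proof.
move=> h0 hs px fx py yx.
rewrite (bigD1 x) //= (bigD1 y) /= in hs; last by rewrite py yx.
rewrite fx addrA in hs.
have h1 : (0 <= \sum_(i < m | (P i && (i != x)) && (i != y)) F i)%R.
  by apply: sumr_ge0 => i /andP [/andP [pi _] _]; apply: h0.
apply/eqP; rewrite eq_le h0 // andbT.
have : (1 + F y <= 1)%R by apply: le_trans hs; rewrite lerDl.
by rewrite gerDl.
Qed.

Lemma sum_exists1 m (P : pred nat) (F : nat -> int) :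
  (forall j : 'I_m, P j -> F j \in [:: (-1)%R; 0%R; 1%R]) ->
  (1 <= \sum_(j < m | P j) F j)%R -> exists j : 'I_m, P j /\ F j = 1%R.
Proof.
move=> hv hs; case: (boolP [exists j : 'I_m, P j && (F j == 1%R)]).
  by case/existsP => j /andP [pj /eqP fj]; exists j.
rewrite negb_exists => /forallP hn.
have : (\sum_(j < m | P j) F j <= 0)%R.
  apply: sumr_le0 => j pj; have := hv j pj; have := hn j; rewrite pj /=.
  by rewrite !inE => /negbTE ->; rewrite orbF => /orP [] /eqP ->.
by move=> h; have := le_trans hs h.
Qed.

Lemma sum_split3 n (F : nat -> int) x : x < n ->
  (\sum_(j < n) F j = \sum_(j < x) F j + F x + \sum_(j < n | (x < j)%N) F j)%R.
Proof.
move=> hx; rewrite (big_ord_widen n F (ltnW hx)) (bigID (fun j : 'I_n => j < x)) /=.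
rewrite -addrA; congr (_ + _)%R.
rewrite (bigD1 (Ordinal hx)) /= ?ltnn //; congr (_ + _)%R.
apply: eq_bigl => j; rewrite -leqNgt.
case: (ltngtP x j) => h; rewrite ?andbT ?andbF //=.
  by apply/eqP => e; move: h; rewrite e ltnn.
by apply/negbTE; rewrite negbK; apply/eqP/val_inj.
Qed.

Lemma asm_rp n A : in_ASM n 1 A ->
  [/\ cl_row A < n, op_col A < n, ent A (cl_row A) (op_col A) = (-1)%R &
      forall i j, ent A i j = (-1)%R -> i = cl_row A /\ j = op_col A].
Proof.
move=> hA; have [r [p [hr hp he hu]]] := asm_neg hA.
have er : cl_row A = r.
  apply: findI => //; first by apply/hasP; exists p; rewrite ?mem_iota ?he.
  move=> y hy; apply/hasP => [[j _ /eqP /hu [ey _]]]; by move: hy; rewrite ey ltnn.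
have ep : op_col A = p.
  rewrite /op_col er; apply: findI => //; first by rewrite he.
  by move=> y hy; apply/eqP => /hu [_ ey]; move: hy; rewrite ey ltnn.
by rewrite er ep; split.
Qed.

Lemma asm_ge0 n A : in_ASM n 1 A -> forall i j,
  (i != cl_row A) || (j != op_col A) -> (0 <= ent A i j)%R.
Proof.
move=> hA i j hij; have [_ _ _ hu] := asm_rp hA.
have := asm_vals hA i j; rewrite !inE => /orP [/eqP e|/orP [] /eqP -> //].
by have [e1 e2] := hu _ _ e; move: hij; rewrite e1 e2 !eqxx.
Qed.

Lemma asm_le1 n A : in_ASM n 1 A -> forall i j, (ent A i j <= 1)%R.
Proof.
by move=> hA i j; have := asm_vals hA i j; rewrite !inE => /or3P [] /eqP ->.
Qed.

Lemma asm_row_unique n A : in_ASM n 1 A -> forall i x j,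
  i != cl_row A -> ent A i x = 1%R -> j != x -> ent A i j = 0%R.
Proof.
move=> hA i x j hi hx hj.
have [hin hxn] : i < n /\ x < n by apply: (@ent_in n A); rewrite hx oner_eq0.
case: (ltnP j n) => hjn; last by rewrite ent_out // hjn orbT.
have [_ hs] := asm_row hA hin.
apply: (@sum_one_unique n xpredT (ent A i) (Ordinal hxn) (Ordinal hjn)) => //.
- by move=> j' _; apply: asm_ge0; rewrite // hi.
- by rewrite hs.

Qed.

Lemma asm_col_unique n A : in_ASM n 1 A -> forall j x i,
  j != op_col A -> ent A x j = 1%R -> i != x -> ent A i j = 0%R.
Proof.
move=> hA j x i hj hx hi.
have [hxn hjn] : x < n /\ j < n by apply: (@ent_in n A); rewrite hx oner_eq0.
case: (ltnP i n) => hin; last by rewrite ent_out // hin.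
have [_ hs] := asm_col hA hjn.
apply: (@sum_one_unique n xpredT (fun i => ent A i j) (Ordinal hxn) (Ordinal hin)) => //.
- by move=> i' _; apply: asm_ge0; rewrite // hj orbT.
- by rewrite hs.

Qed.

Lemma asm_k n A : in_ASM n 1 A ->
  [/\ op_row A < cl_row A, ent A (op_row A) (op_col A) = 1%R,
      forall y, y < op_row A -> ent A y (op_col A) != 1%R &
      forall j, j != op_col A -> ent A (op_row A) j = 0%R].
Proof.
move=> hA; have [hr hp he hu] := asm_rp hA.
set r := cl_row A in hr he hu *; set p := op_col A in hp he hu *.
have [hpre _] := asm_col hA hp.
have h1 := hpre r.+1 hr.
rewrite big_ord_recr /= he in h1.
have hs : (1 <= \sum_(i < r) ent A i p)%R.
  by case/andP: h1 => h1 _; rewrite -subr_ge0.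
have [i [_ hi]] := @sum_exists1 r xpredT (fun i => ent A i p) (fun j _ => asm_vals hA j p) hs.
have hh : has (fun i => (i < r) && (ent A i p == 1%R)) (iota 0 n).
  by apply/hasP; exists (val i); rewrite ?mem_iota ?hi ?eqxx ?ltn_ord //= (ltn_trans (ltn_ord i) hr).
have [kn /andP [kr /eqP kp] kmin] := findS hh.
rewrite /op_row -/r -/p; split => //.
- move=> y hy; have := kmin y hy; rewrite (ltn_trans hy kr) /=.
  done.
move=> j hj; apply: (asm_row_unique hA _ kp hj).
by rewrite neq_ltn kr.
Qed.

Lemma asm_rowr n A : in_ASM n 1 A ->
  (exists a, [/\ a < op_col A, ent A (cl_row A) a = 1%R &
              forall j, j < op_col A -> j != a -> ent A (cl_row A) j = 0%R]) /\
  [/\ op_col A < cl_col A, cl_col A < n, ent A (cl_row A) (cl_col A) = 1%R &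
      forall j, op_col A < j -> j != cl_col A -> ent A (cl_row A) j = 0%R].
Proof.
move=> hA; have [hr hp he hu] := asm_rp hA.
rewrite /cl_col.
set r := cl_row A in hr he hu *; set p := op_col A in hp he hu *.
have [hpre htot] := asm_row hA hr.
have h1 := hpre p.+1 hp.
rewrite big_ord_recr /= he in h1.
have hl1 : (1 <= \sum_(j < p) ent A r j)%R.
  by case/andP: h1 => h1 _; rewrite -subr_ge0.
have hl2 : (\sum_(j < p) ent A r j <= 1)%R by case/andP: (hpre p (ltnW hp)).
have hge : forall j, j < p -> (0 <= ent A r j)%R.
  by move=> j hj; apply: (asm_ge0 hA); apply/orP; right; rewrite neq_ltn hj.
split.
  have [a [_ ha]] := @sum_exists1 p xpredT (ent A r) (fun j _ => asm_vals hA r j) hl1.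
  exists a; split => //.
  move=> j hj hja.
  apply: (@sum_one_unique p xpredT (ent A r) a (Ordinal hj)) => //.
  by move=> j' _; apply: hge.
have hl : (\sum_(j < p) ent A r j = 1)%R by apply/eqP; rewrite eq_le hl1 hl2.
have hR : (\sum_(j < n | (p < j)%N) ent A r j = 1)%R.
  move: htot; rewrite (sum_split3 _ hp) hl he addrN add0r //.
have hgeR : forall j : 'I_n, (p < j)%N -> (0 <= ent A r j)%R.
  by move=> j hj; apply: (asm_ge0 hA); apply/orP; right; rewrite neq_ltn hj orbT.
have hR1 : (1 <= \sum_(j < n | (p < j)%N) ent A r j)%R by rewrite hR.
have [q [pq hq]] := @sum_exists1 n (fun j => p < j) (ent A r) (fun j _ => asm_vals hA r j) hR1.
have huq : forall j, p < j -> j != q -> ent A r j = 0%R.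
  move=> j hj hjq; case: (ltnP j n) => hjn; last by rewrite ent_out // hjn orbT.
  apply: (@sum_one_unique n (fun j => p < j) (ent A r) q (Ordinal hjn)) => //.
  by rewrite hR.
have eq : find (fun j => (p < j) && (ent A r j == 1%R)) (iota 0 n) = q.
  apply: findI; rewrite ?ltn_ord ?pq ?hq ?eqxx //.
  move=> y hy; apply/negP => /andP [py /eqP ey].
  by move: (huq y py (negbT (ltn_eqF hy))); rewrite ey => /eqP; rewrite oner_eq0.
by rewrite eq; split.
Qed.

Lemma asm_lead n A : in_ASM n 1 A ->
  [/\ op_row A < lead_row A, lead_row A <= cl_row A, lead_col A < op_col A,
      ent A (lead_row A) (lead_col A) = 1%R &
      (forall j, j < op_col A -> j != lead_col A -> ent A (lead_row A) j = 0%R) /\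
      (forall i j, op_row A < i -> i < lead_row A -> j < op_col A -> ent A i j = 0%R)].
Proof.
move=> hA; have [hr hp he hu] := asm_rp hA.
have [kr kp kmin krow] := asm_k hA.
have [[a [ap ha hau]] _] := asm_rowr hA.
have [hpre _] := asm_row hA hr.
set Q := fun i => (op_row A < i) && has (fun j => (j < op_col A) && (ent A i j == 1%R)) (iota 0 n).
have hQ : has Q (iota 0 n).
  apply/hasP; exists (cl_row A); first by rewrite mem_iota.
  rewrite /Q kr /=.
  apply/hasP; exists a; first by rewrite mem_iota (ltn_trans ap hp).
  by rewrite ap ha eqxx.
have [lrn /andP [klr hlr] lrmin] := findS hQ.
rewrite /lead_col /lead_row -/Q.
set lr := find Q (iota 0 n) in lrn klr hlr lrmin *.
have lrr : lr <= cl_row A.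
  rewrite leqNgt; apply/negP => h; have := lrmin _ h; rewrite /Q kr /=.
  move/negP; apply; apply/hasP; exists a; first by rewrite mem_iota (ltn_trans ap hp).
  by rewrite ap ha eqxx.
have [lcn /andP [lcp /eqP lc1] lcmin] := findS hlr.
set lc := find _ (iota 0 n) in lcn lcp lc1 lcmin *.
split => //; split.
- move=> j hj hjl; case: (eqVneq lr (cl_row A)) => hlrr.
    have lca : lc = a.
      apply/eqP; apply/negP => /negP h; have := hau _ lcp h.
      by rewrite -hlrr lc1 => /eqP; rewrite oner_eq0.
    by rewrite hlrr; apply: hau => //; rewrite -lca.
  exact: (asm_row_unique hA hlrr lc1 hjl).
move=> i j ki ilr jp.
have ir : i != cl_row A by rewrite neq_ltn (leq_trans ilr lrr).
have := asm_vals hA i j; rewrite !inE => /or3P [/eqP e|/eqP //|/eqP e].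
  by have [e1 _] := hu _ _ e; move: ir; rewrite e1 eqxx.
have := lrmin _ ilr; rewrite /Q ki /=; move/negP; case; apply/hasP; exists j; rewrite ?jp ?e ?eqxx //.
have [_ jn] : i < n /\ j < n by apply: (@ent_in n A); rewrite e oner_eq0.
by rewrite mem_iota.
Qed.

Lemma filter_iota_head (P : pred nat) a m x : a <= x -> x < a + m -> P x ->
  (forall y, a <= y -> y < x -> ~~ P y) ->
  [seq i <- iota a m | P i] = x :: [seq i <- iota x.+1 (a + m - x.+1) | P i].
Proof.
move=> ax xm px hmin.
have -> : m = (x - a) + (a + m - x) by lia.
rewrite iotaD filter_cat.
have -> : a + (x - a) = x by lia.
have -> : [seq i <- iota a (x - a) | P i] = [::].
  apply/eqP; rewrite -[_ == _]negbK -has_filter; apply/hasP => [[y]].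
  rewrite mem_iota => /andP [ay yx] py; have yx' : y < x by lia.
  by move: (hmin y ay yx'); rewrite py.
have hpos : 0 < a + m - x by lia.
rewrite -(prednK hpos) /= px; congr (_ :: _); congr (filter _ (iota _ _)); lia.
Qed.

Lemma Vdisp_top n f C r0 r1 x j : r0 < x <= r1 ->
  has (fun j' => C j' && (f x j' != 0%R)) (iota 0 n) ->
  (forall y, r0 < y -> y < x -> ~~ has (fun j' => C j' && (f y j' != 0%R)) (iota 0 n)) ->
  Vdisp n f C r0 r1 r0 j = f x j.
Proof.
move=> /andP [h0 h1] hx hmin.
rewrite /Vdisp eqxx orbT /=.
rewrite (@filter_iota_head _ r0.+1 (r1 - r0) x) //; last by lia.

Qed.

Lemma delta_top n A : in_ASM n 1 A -> forall i j, i < op_row A -> j < n ->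
  ent (delta A) i j = ent A i j.
Proof.
move=> hA i j hi hj.
have [kr _ _ _] := asm_k hA.
have [hr _ _ _] := asm_rp hA.
rewrite /delta ent_mkmx //=; last by lia.
have h1 : (op_row A <= i) = false by lia.
have h2 : (op_row A < i) = false by lia.
have h3 : (cl_row A < i) = false by lia.
have h4 : (i == cl_row A) = false by lia.
by rewrite h1 h2 h3 h4 /= !andbF.
Qed.

Lemma delta_k n A : in_ASM n 1 A -> forall j, j < n ->
  ent (delta A) (op_row A) j = ent A (op_row A) j.
Proof.
move=> hA j hj.
have [kr kp _ krow] := asm_k hA.
have [hr _ _ _] := asm_rp hA.
rewrite /delta ent_mkmx //=; last by lia.
have h1 : (op_row A <= cl_row A) by lia.
have h3 : (cl_row A < op_row A) = false by lia.
have h4 : (op_row A == cl_row A) = false by lia.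
rewrite leqnn eqxx h1 ltnn h3 h4 /= !andbF /=.
case: (ltnP j (op_col A)) => //= hjp.
by rewrite krow //; lia.
Qed.

Lemma delta_k1 n A : in_ASM n 1 A -> forall j, j < op_col A ->
  ent (delta A) (op_row A).+1 j = ent A (lead_row A) j.
Proof.
move=> hA j hj.
have [kr kp _ krow] := asm_k hA.
have [hr hp _ _] := asm_rp hA.
have [_ [pq qn _ _]] := asm_rowr hA.
have [klr lrr lcp lc1 [lcu lzero]] := asm_lead hA.
rewrite /delta ent_mkmx //=; try lia.
have h1 : ((op_row A).+1 <= cl_row A) by lia.
have h5 : ((op_row A).+1 == op_row A) = false by lia.
rewrite hj h1 /= leqnSn h5 /= leqnn (ltnW kr) /=.
set g := (X in Vdisp n X).
have hg : forall y j', y <= cl_row A -> j' < op_col A -> g y j' = ent A y j'.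
  move=> y j' hy hj'; rewrite /g.
  have -> : (cl_row A < y) = false by lia.
  have -> : (j' == op_col A) = false by lia.
  have -> : (j' == cl_col A) = false by lia.
  by rewrite /= andbF.
rewrite (@Vdisp_top n g _ _ _ (lead_row A)) ?hg //; try lia.
- apply/hasP; exists (lead_col A); first by rewrite mem_iota; lia.
  by rewrite lcp hg ?lc1 ?oner_eq0.
move=> y hy hylr; apply/hasP => [[j' _ /andP [hj' hne]]].
by move: hne; rewrite hg ?lzero ?eqxx //; lia.
Qed.

Lemma ell_formula n A : in_ASM n 1 A ->
  ell A = (\sum_(j < n) (if (lead_col A < j < op_col A)%N then
             1 - \sum_(i < op_row A) ent A i j else 0))%R.
Proof.
move=> hA; have [kr kp _ krow] := asm_k hA.
have [hr hp _ _] := asm_rp hA.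
rewrite /ell /rsum exchange_big /=; apply: eq_bigr => j _.
case: ifP => hc; last by apply: big1 => i _; rewrite andbF.
have [_ hs] := asm_col hA (ltn_ord j).
have hk : op_row A < n by lia.
rewrite (@sum_split3 n (fun i => ent A i j) _ hk) /= krow ?addr0 in hs; last by case/andP: hc => _ h; lia.
rewrite -hs addrC addKr.
by rewrite [RHS]big_mkcond; apply: eq_bigr => i _; rewrite andbT.
Qed.

Definition fnd (g : nat -> int) n := find (fun j => g j == 1%R) (iota 0 n).

Definition Gf n (k : nat) (D : 'M[int]_n) : int :=
  (\sum_(j < n) (if (fnd (ent D k.+1) n < j < fnd (ent D k) n)%N then
             1 - \sum_(i < k) ent D i j else 0))%R.

Lemma ell_G n A : in_ASM n 1 A -> ell A = Gf (op_row A) (delta A).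
Proof.
move=> hA; have [kr kp _ krow] := asm_k hA.
have [hr hp _ _] := asm_rp hA.
have [klr lrr lcp lc1 [lcu lzero]] := asm_lead hA.
have ep : fnd (ent (delta A) (op_row A)) n = op_col A.
  apply: findI => //; first by rewrite delta_k // kp.
  move=> y hy; rewrite delta_k ?krow; first by rewrite eq_sym oner_eq0.
  all: try lia.
have elc : fnd (ent (delta A) (op_row A).+1) n = lead_col A.
  apply: findI; first lia.
    by rewrite delta_k1 // lc1.
  move=> y hy; rewrite delta_k1 ?lcu; first by rewrite eq_sym oner_eq0.
  all: try lia.
rewrite ell_formula // /Gf ep elc; apply: eq_bigr => j _.
case: ifP => // _; congr (_ - _)%R; apply: eq_bigr => i _.
by rewrite delta_top.
Qed.

Lemma rev_iota0 n : rev (iota 0 n) = map (fun j => n - j.+1) (iota 0 n).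
Proof.
apply: (@eq_from_nth _ 0); first by rewrite size_rev size_map.
move=> i; rewrite size_rev size_iota => hi.
by rewrite nth_rev ?size_iota // (nth_map 0) ?size_iota // !nth_iota //; lia.
Qed.

Lemma alt_ok_rev s : alt_ok (rev s) = alt_ok s.
Proof.
rewrite /alt_ok /nzseq filter_rev.
set t := [seq x <- s | x != 0%R].
have hh : head 0%R (rev t) = last 0%R t.
  by case/lastP: t => [|t' y] //; rewrite rev_rcons last_rcons.
have hl : last 0%R (rev t) = head 0%R t.
  by clear hh; case: t => [|y t'] //; rewrite rev_cons last_rcons.
have hs : sorted (fun x y => y == (- x)%R) (rev t) = sorted (fun x y => y == (- x)%R) t.
  clear hh hl; rewrite rev_sorted; case: t => [|y t'] //=; apply: eq_path => u v /=.
  by rewrite eq_sym eqr_oppLR.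
by rewrite hh hl hs andbA [(_ == 1%R) && _]andbC -andbA.
Qed.

Lemma refl_asm n A : in_ASM n 1 A -> in_ASM n 1 (refl A).
Proof.
move=> hA; have hA' := hA; case/andP: hA' => /and3P [/forallP hv /forallP hr /forallP hc] hn.
apply/andP; split; first (apply/and3P; split).
- apply/forallP => i; apply/forallP => j; rewrite /refl mxE.
  exact: (forallP (hv i) (rev_ord j)).
- apply/forallP => i; rewrite row_seq.
  have -> : map (ent (refl A) i) (iota 0 n) = rev (map (ent A i) (iota 0 n)).
    rewrite -map_rev rev_iota0 -map_comp; apply/eq_in_map => j /=.
    rewrite mem_iota => /andP [_ hj]; rewrite ent_refl //.
  by rewrite alt_ok_rev -row_seq.
- apply/forallP => j.
  have -> : [seq refl A i j | i <- enum 'I_n] = [seq A i (rev_ord j) | i <- enum 'I_n].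
    by apply: eq_map => i; rewrite /refl mxE.
  exact: hc.
rewrite /num_neg.
have -> : [set ij : 'I_n * 'I_n | refl A ij.1 ij.2 == (-1)%R] =
  (fun ij : 'I_n * 'I_n => (ij.1, rev_ord ij.2)) @^-1: [set ij : 'I_n * 'I_n | A ij.1 ij.2 == (-1)%R].
  by apply/setP => ij; rewrite !inE /refl mxE.
rewrite card_preimset //.
move=> [i j] [i1 j1] /= [-> hj]; congr (_, _); apply: val_inj => /=; move: hj (ltn_ord j) (ltn_ord j1); lia.
Qed.

Lemma reflK n (A : 'M[int]_n) : refl (refl A) = A.
Proof. by apply/matrixP => i j; rewrite /refl !mxE rev_ordK. Qed.

Lemma refl_pos n A : in_ASM n 1 A ->
  [/\ cl_row (refl A) = cl_row A, op_col (refl A) = n - (op_col A).+1 &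
      op_row (refl A) = op_row A].
Proof.
move=> hA; have hR := refl_asm hA.
have [hr hp he hu] := asm_rp hA.
have [hr' hp' he' hu'] := asm_rp hR.
have e1 : ent (refl A) (cl_row A) (n - (op_col A).+1) = (-1)%R.
  rewrite ent_refl; last lia.
  by have -> : n - (n - (op_col A).+1).+1 = op_col A by lia.
have [er ep] := hu' _ _ e1.
have [kr kp kmin _] := asm_k hA.
have [kr' kp' kmin' _] := asm_k hR.
split => //.
rewrite -er -ep in kr' kp' kmin'.
rewrite ent_refl in kp'; last lia.
have ee : n - (n - (op_col A).+1).+1 = op_col A by lia.
rewrite ee in kp'.
case: (ltngtP (op_row (refl A)) (op_row A)) => // h.
  by move: (kmin _ h); rewrite kp' eqxx.
move: (kmin' _ h); rewrite ent_refl ?ee ?kp ?eqxx //; lia.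
Qed.

Lemma neg_refl n A : in_ASM n 1 A -> negative A -> ~~ negative (refl A).
Proof.
move=> hA /andP [hk /hasP [j1 _ /andP [j1p /eqP e1]]].
have [er ep ek] := refl_pos hA.
have [hr hp he hu] := asm_rp hA.
rewrite /negative er ep ek hk /=; apply/hasP => [[j2 hj2 /andP [j2p /eqP e2]]].
rewrite mem_iota in hj2.
rewrite ent_refl in e2; last lia.
have hne : n - j2.+1 != j1 by lia.
have hrr : (cl_row A).-1 != cl_row A by lia.
by move: (asm_row_unique hA hrr e1 hne); rewrite e2 => /eqP; rewrite oner_eq0.
Qed.

Lemma rsum_ext n f g P Q :
  (forall i j, i < n -> j < n -> (if P i j then f i j else 0%R) = (if Q i j then g i j else 0%R)) ->
  rsum n f P = rsum n g Q.
Proof. by move=> h; apply: eq_bigr => i _; apply: eq_bigr => j _; apply: h. Qed.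

Lemma rsum_refl n (A : 'M[int]_n) P :
  rsum n (ent (refl A)) P = rsum n (ent A) (fun i j => P i (n - j.+1)).
Proof.
apply: eq_bigr => i _; rewrite (reindex_inj rev_ord_inj) /=; apply: eq_bigr => j _.
rewrite ent_refl; last by apply: rev_ord_proof.
have -> : n - (n - j.+1).+1 = j by have := ltn_ord j; lia.
have hj := ltn_ord j.
case: (P i (n - j.+1)) => //.
Qed.

Lemma neutral_refl n N : in_ASM n 1 N -> neutral N ->
  ell (refl N) = cpar N /\ cpar (refl N) = ell N.
Proof.
move=> hN hneu; rewrite /neutral in hneu; move/eqP: hneu => hneu.
have hR := refl_asm hN.
have [er ep ek] := refl_pos hN.
have [hr hp he hu] := asm_rp hN.
have [kr kp kmin krow] := asm_k hN.
have [[a [ap ha hau]] [pq qn hq hqu]] := asm_rowr hN.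
have [klr lrr lcp lc1 [lcu lzero]] := asm_lead hN.
have [[aR [apR haR hauR]] [pqR qnR hqR hquR]] := asm_rowr hR.
have [klrR lrrR lcpR lc1R [lcuR lzeroR]] := asm_lead hR.
rewrite er ep ek in apR haR hauR pqR qnR hqR hquR klrR lrrR lcpR lc1R lcuR lzeroR.
have elr : lead_row N = cl_row N by lia.
have elrR : lead_row (refl N) = cl_row N by lia.
rewrite elr in lcp lc1 lcu.
rewrite elrR in lcpR lc1R lcuR.
have elc : lead_col N = a.
  apply/eqP; apply/negP => /negP h; move: (hau _ lcp h); rewrite lc1 => /eqP.
  by rewrite oner_eq0.
have eqR : cl_col (refl N) = n - a.+1.
  apply/eqP; apply/negP => /negP h.
  have hpa : n - (op_col N).+1 < n - a.+1 by lia.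
  move: (hquR _ hpa); rewrite eq_sym => /(_ h).
  rewrite ent_refl; last by lia.
  have -> : n - (n - a.+1).+1 = a by lia.
  by rewrite ha => /eqP; rewrite oner_eq0.
have elcR : lead_col (refl N) = n - (cl_col N).+1.
  apply/eqP; apply/negP => /negP h.
  have hpa : n - (cl_col N).+1 < n - (op_col N).+1 by lia.
  move: (lcuR _ hpa); rewrite eq_sym => /(_ h).
  rewrite ent_refl; last by lia.
  have -> : n - (n - (cl_col N).+1).+1 = cl_col N by lia.
  by rewrite hq => /eqP; rewrite oner_eq0.
split.
- rewrite /ell /cpar rsum_refl ek ep elcR; apply: rsum_ext => i j hi hj.
  case: (eqVneq i (cl_row N)) => [->|hir].
    rewrite ltnn /=.
    have -> : (op_row N < cl_row N) = true by lia.
    case: ifP => //= hc; apply: hqu; lia.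
  have -> : (op_row N < i) = (cl_row N < i) by lia.
  have -> : (n - (cl_col N).+1 < n - j.+1 < n - (op_col N).+1) = (op_col N < j < cl_col N) by lia.
  by [].
- rewrite /ell /cpar rsum_refl er ep eqR elc; apply: rsum_ext => i j hi hj.
  case: (eqVneq i (cl_row N)) => [->|hir].
    rewrite ltnn /=.
    have -> : (op_row N < cl_row N) = true by lia.
    case: ifP => //= hc; rewrite hau //; lia.
  have -> : (op_row N < i) = (cl_row N < i) by lia.
  have -> : (n - (op_col N).+1 < n - j.+1 < n - a.+1) = (a < j < op_col N) by lia.
  by [].
Qed.

Lemma rsum_ge0 n (f : nat -> nat -> int) (P : nat -> nat -> bool) : (forall i j, i < n -> j < n -> P i j -> (0 <= f i j)%R) ->
  (0 <= rsum n f P)%R.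
Proof.
move=> h; apply: sumr_ge0 => i _; apply: sumr_ge0 => j _.
by case: ifP => // hp; apply: h.
Qed.

Lemma rsum_ge_term n (f : nat -> nat -> int) (P : nat -> nat -> bool) i0 j0 :
  (forall i j, i < n -> j < n -> P i j -> (0 <= f i j)%R) ->
  i0 < n -> j0 < n -> P i0 j0 -> (f i0 j0 <= rsum n f P)%R.
Proof.
move=> h hi hj hp.
rewrite /rsum (bigD1 (Ordinal hi)) //= (bigD1 (Ordinal hj)) //= hp.
rewrite -addrA lerDl; apply: addr_ge0.
  by apply: sumr_ge0 => j _; case: ifP => // ?; apply: h.
apply: sumr_ge0 => i _; apply: sumr_ge0 => j _.
by case: ifP => // ?; apply: h.
Qed.

Lemma ell_ge0 n A : in_ASM n 1 A -> (0 <= ell A)%R.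
Proof.
move=> hA; apply: rsum_ge0 => i j _ _ /andP [_ /andP [_ hj]].
apply: (asm_ge0 hA); apply/orP; right; lia.
Qed.

Lemma cpar_ge0 n A : in_ASM n 1 A -> (0 <= cpar A)%R.
Proof.
move=> hA; apply: rsum_ge0 => i j _ _ /andP [hi _].
apply: (asm_ge0 hA); apply/orP; left; lia.
Qed.

Lemma charged_ge0 n A : in_ASM n 1 A -> (0 <= charged A)%R.
Proof.
move=> hA; apply: rsum_ge0 => i j _ _ /andP [/andP [_ hi] _].
apply: (asm_ge0 hA); apply/orP; left; lia.
Qed.

Lemma Epar_ge0 n A : in_ASM n 1 A -> ~~ negative A -> (0 <= Epar A)%R.
Proof.
move=> hA hn; rewrite /Epar (negbTE hn); case: ifP => // _.
exact: charged_ge0.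
Qed.

Lemma pos_Epar n A : in_ASM n 1 A -> positive A -> (0 < Epar A)%R.
Proof.
move=> hA hpos; rewrite /Epar hpos.
case/andP: hpos => hk /hasP [j hj /andP [pj /eqP e1]].
rewrite mem_iota in hj.
have [hr _ _ _] := asm_rp hA.
apply: (lt_le_trans (ltr01 : (0 < 1 :> int)%R)); rewrite -e1.
apply: rsum_ge_term; try lia.
  move=> i j' _ _ /andP [/andP [_ hi] _].
  apply: (asm_ge0 hA); apply/orP; left; lia.
Qed.

Lemma Lpn_facts n (A N : 'M[int]_n) E : in_ASM n 1 A -> Lambda_pn A N E ->
  [/\ in_ASM n 1 N, neutral N, ell N = ell A & cpar N = (cpar A + Epar A)%R].
Proof.
move=> hA [hE hN hpn hD].
rewrite /Delta in hD; case: hD => hk hd hc he.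
have hneu : neutral N.
  case/orP: hpn => // hpos; have := pos_Epar hN hpos; by rewrite he ltxx.
split => //.
by rewrite (ell_G hN) (ell_G hA) hk hd.
Qed.

Theorem lemma3 (n : nat) (A N : 'M[int]_n) (E : int) :
  in_ASM n 1 A -> Lambda A N E ->
  ((- ell N <= Bpar A)%R /\ (Bpar A <= cpar N)%R).
Proof.
move=> hA; rewrite /Lambda /Bpar; case: ifP => hneg hL.
  have hA' := refl_asm hA.
  have [hN' hneu hell hc] := Lpn_facts hA' hL.
  have [e1 e2] := neutral_refl hN' hneu.
  rewrite reflK in e1 e2.
  rewrite e1 e2 hc hell.
  have h1 := Epar_ge0 hA' (neg_refl hA hneg).
  have h2 := cpar_ge0 hA'.
  have h3 := ell_ge0 hA'.
  split; lia.
have [hN hneu hell hc] := Lpn_facts hA hL.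
have h1 := Epar_ge0 hA (negbT hneg).
have h2 := cpar_ge0 hA.
have h3 := ell_ge0 hA.
rewrite hell hc; split; lia.
Qed.
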